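(* Let $\hat\nabla$ be a torsion-free connection on $TM$, $E\to M$ a vector bundle with connection $\nabla$, $p\in M$, and $(e^1,\dots,e^n)$ coordinates about $p$ with coordinate vector fields $e_i$, such that all higher-order Christoffel symbols vanish at $p$: $\Gamma^k_{I,j}(p)=0$ for all nonempty words $I$ and all $j,k$. Then for all $s\ge0$: (1) $[\hat\nabla^s\Gamma^k_{I,j}]_p=0$ for all nonempty words $I$ and all $j,k$; (2) $[\hat\nabla^sR^{TM}]_p=0$; (3) for every word $S=i_1\cdots i_s$ and $\alpha\in C^\infty(E)$, $[\nabla^s_{e_S}\alpha]_p=[\nabla_{e_{i_1}}\circ\cdots\circ\nabla_{e_{i_s}}\alpha]_p$; (4) for every word $S$ of length $s$ and every $n$-dimensional multi-index $T$ (no restriction on $|T|$), $[\hat\nabla^s_{e_S}\frac{(e-p)^T}{T!}]_p=\delta_{\langle S\rangle,T}$, and for $\alpha\in C^\infty(E)$, $\big[\nabla^s_{e_S}\frac{(e-p)^T\alpha}{T!}\big]_p=\delta_{\langle S_{(1)}\rangle,T}\,\big(\nabla^{|S_{(2)}|}_{e_{S_{(2)}}}\alpha\big)_p$, with Sweedler summation over the unshuffle coproduct of the word $S$.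
   Context: Higher covariant derivatives: $\nabla^0=\mathrm{Id}$, $\nabla^1_X=\nabla_X$, $\nabla^{j+1}_{X_0,\dots,X_j}\alpha=\nabla_{X_0}(\nabla^j_{X_1,\dots,X_j}\alpha)-\sum_{k=1}^j\nabla^j_{X_1,\dots,\hat\nabla_{X_0}X_k,\dots,X_j}\alpha$, extended $C^\infty(M)$-linearly to $v\in C^\infty(\otimes^jTM)$; $\hat\nabla^j$ is the same construction for tensor bundles of $TM$ with the connection induced by $\hat\nabla$. For a word $I=i_1\cdots i_m$ in $\{1,\dots,n\}$, $e_I=e_{i_1}\otimes\cdots\otimes e_{i_m}$; higher-order Christoffel symbols are defined by $\hat\nabla^{|I|}_{e_I}e_j=\Gamma^k_{I,j}e_k$. $R^{TM}_{X,Y}=\hat\nabla^2_{X,Y}-\hat\nabla^2_{Y,X}$. Unshuffle coproduct on words: $\Delta(i_1\cdots i_s)=\sum_{r}\sum_{\sigma\in Sh(r,s-r)}(i_{\sigma(1)}\cdots i_{\sigma(r)})\otimes(i_{\sigma(r+1)}\cdots i_{\sigma(s)})$, written $S_{(1)}\otimes S_{(2)}$. $(e-p)^T=\prod_i(e^i-e^i(p))^{T_i}$, $T!=\prod T_i!$, and $\langle S\rangle$ is the multi-index counting occurrences of each letter in $S$. *)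

(* Defs.v *)
(* Local (coordinate-chart) model of Lemma 2.14: the chart image is an open
   set U of R^n = 'rV[R]_n, the coordinate vector fields are the standard
   directions, the bundle E is trivialised over U with frame (f_b)_{b<r}. *)
From HB Require Import structures.
From mathcomp Require Import all_boot all_order all_algebra.
From mathcomp Require Import all_classical all_reals all_analysis.
Set Implicit Arguments. Unset Strict Implicit. Unset Printing Implicit Defensive.
Import Order.TTheory GRing.Theory Num.Theory.
Import numFieldNormedType.Exports.
Local Open Scope classical_set_scope.
Local Open Scope ring_scope.

Definition partial {R : realType} {n : nat} (i : 'I_n)
  (f : 'rV[R]_n -> R) (x : 'rV[R]_n) : R := 'D_(delta_mx 0 i) f x.

Fixpoint iter_partial {R : realType} {n : nat} (ws : seq 'I_n)
  (f : 'rV[R]_n -> R) : 'rV[R]_n -> R :=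
  match ws with [::] => f | i :: ws' => partial i (iter_partial ws' f) end.

Definition smooth_on {R : realType} {n : nat} (U : set 'rV[R]_n)
  (f : 'rV[R]_n -> R) : Prop :=
  forall (ws : seq 'I_n) (x : 'rV[R]_n), U x -> differentiable (iter_partial ws f) x.

(* Component field of a (possibly B-twisted) tensor field:
   value at (lower indices L, upper indices Up, twist index b, point x). *)
Definition cfield (R : realType) (n : nat) (B : finType) :=
  seq 'I_n -> seq 'I_n -> B -> 'rV[R]_n -> R.

(* Higher covariant derivative (components on coordinate frames), following
   the recursive definition
   nabla^{j+1}_{X0..Xj} a = nabla_{X0}(nabla^j_{X1..Xj} a)
                            - sum_k nabla^j_{X1,..,hat-nabla_{X0}X_k,..,Xj} a.
   Conventions: hat-nabla_{e_i} e_j = sum_k G i j k e_k   (TM connection),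
                nabla_{e_i} f_b = sum_b' A i b b' f_b'    (twist connection). *)
Fixpoint hc {R : realType} {n : nat} {B : finType}
  (G : 'I_n -> 'I_n -> 'I_n -> 'rV[R]_n -> R)
  (A : 'I_n -> B -> B -> 'rV[R]_n -> R)
  (F : cfield R n B) (d : nat) (S : seq 'I_n) : cfield R n B :=
  match d, S with
  | d'.+1, i0 :: W => fun L Up b x =>
      partial i0 (fun y => hc G A F d' W L Up b y) x
      + \sum_(b' : B) A i0 b' b x * hc G A F d' W L Up b' x
      - \sum_(k < size L) \sum_(m < n)
          G i0 (nth i0 L k) m x * hc G A F d' W (set_nth m L k m) Up b x
      + \sum_(k < size Up) \sum_(m < n)
          G i0 m (nth i0 Up k) x * hc G A F d' W L (set_nth m Up k m) b x
      - \sum_(k < size W) \sum_(m < n)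
          G i0 (nth i0 W k) m x * hc G A F d' (set_nth m W k m) L Up b x
  | _, _ => F
  end.

Definition hcov {R : realType} {n : nat} {B : finType}
  (G : 'I_n -> 'I_n -> 'I_n -> 'rV[R]_n -> R)
  (A : 'I_n -> B -> B -> 'rV[R]_n -> R)
  (F : cfield R n B) (S : seq 'I_n) : cfield R n B :=
  hc G A F (size S) S.

Definition hcovT {R : realType} {n : nat}
  (G : 'I_n -> 'I_n -> 'I_n -> 'rV[R]_n -> R)
  (F : cfield R n unit) (S : seq 'I_n) : cfield R n unit :=
  hcov G (fun _ _ _ _ => 0) F S.

Definition vecfield {R : realType} {n : nat} (j : 'I_n) : cfield R n unit :=
  fun L Up _ _ => if Up is [:: k] then (k == j)%:R else 0.

Definition scalarfield {R : realType} {n : nat} (f : 'rV[R]_n -> R)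
  : cfield R n unit := fun _ _ _ x => f x.

Definition sectionf {R : realType} {n r : nat} (a : 'I_r -> 'rV[R]_n -> R)
  : cfield R n 'I_r := fun _ _ b x => a b x.

(* higher-order Christoffel symbols: hat-nabla^{|I|}_{e_I} e_j = Gamma^k_{I,j} e_k *)
Definition chr {R : realType} {n : nat}
  (G : 'I_n -> 'I_n -> 'I_n -> 'rV[R]_n -> R)
  (k : 'I_n) (W : seq 'I_n) (j : 'I_n) (x : 'rV[R]_n) : R :=
  hcovT G (vecfield j) W [::] [:: k] tt x.

(* R^{TM}(e_a,e_b) e_c = sum_d Rcomp_{abc}^d e_d, with
   R^{TM}_{X,Y} = hat-nabla^2_{X,Y} - hat-nabla^2_{Y,X} *)
Definition Rcomp {R : realType} {n : nat}
  (G : 'I_n -> 'I_n -> 'I_n -> 'rV[R]_n -> R) : cfield R n unit :=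
  fun L Up _ x =>
    match L, Up with
    | [:: a; b; c], [:: d] => chr G d [:: a; b] c x - chr G d [:: b; a] c x
    | _, _ => 0
    end.

Definition cov1 {R : realType} {n r : nat}
  (A : 'I_n -> 'I_r -> 'I_r -> 'rV[R]_n -> R) (i : 'I_n)
  (a : 'I_r -> 'rV[R]_n -> R) : 'I_r -> 'rV[R]_n -> R :=
  fun b x => partial i (a b) x + \sum_(b' < r) A i b' b x * a b' x.

Definition iter_cov {R : realType} {n r : nat}
  (A : 'I_n -> 'I_r -> 'I_r -> 'rV[R]_n -> R) (S : seq 'I_n)
  (a : 'I_r -> 'rV[R]_n -> R) : 'I_r -> 'rV[R]_n -> R :=
  foldr (fun i b => cov1 A i b) a S.

Definition monomial {R : realType} {n : nat} (p : 'rV[R]_n) (T : 'I_n -> nat)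
  (x : 'rV[R]_n) : R :=
  (\prod_(i < n) (x ord0 i - p ord0 i) ^+ T i) / (\prod_(i < n) (T i)`!)%:R.

Definition letters {n : nat} (S : seq 'I_n) : 'I_n -> nat :=
  fun i => count_mem i S.

Definition kdelta {R : realType} {n : nat} (P Q : 'I_n -> nat) : R :=
  if [forall i, P i == Q i] then 1 else 0.

(* unshuffle coproduct: shuffles in Sh(r, s-r) <-> subsets of positions *)
Definition unshuffle {n : nat} (S : seq 'I_n) : seq (seq 'I_n * seq 'I_n) :=
  [seq (mask (val m) S, mask (map negb (val m)) S)
  | m <- enum {: (size S).-tuple bool}].

(* Main.v *)
Require Import Defs.
From HB Require Import structures.
From mathcomp Require Import all_boot all_order all_algebra.
From mathcomp Require Import all_classical all_reals all_analysis.
From mathcomp Require Import ring.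
Import Order.TTheory GRing.Theory Num.Theory.
Import numFieldNormedType.Exports.
Local Open Scope classical_set_scope.
Local Open Scope ring_scope.

Set Implicit Arguments. Unset Strict Implicit. Unset Printing Implicit Defensive.


Section Basics.
Variables (R : realType) (n : nat) (U : set 'rV[R]_n).
Hypothesis oU : open U.
Implicit Types (f g : 'rV[R]_n -> R) (ws : seq 'I_n) (x : 'rV[R]_n).

Definition eqU (f g : 'rV[R]_n -> R) := forall x, U x -> f x = g x.
Definition smN (N : nat) (f : 'rV[R]_n -> R) := forall ws, (size ws <= N)%N ->
  forall x (i : 'I_n), U x -> derivable (iter_partial ws f) x (delta_mx 0 i).
Definition sm f := forall N, smN N f.

Lemma nearU {x} : U x -> \forall y \near x, U y.
Proof. by move=> Ux; apply: open_nbhs_nbhs; split. Qed.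

Lemma partial_eqU f g i : eqU f g -> eqU (partial i f) (partial i g).
Proof.
move=> fg x Ux; rewrite /partial; apply: near_eq_derive.
by apply: filterS (nearU Ux); exact: fg.
Qed.

Lemma ip_eqU ws f g : eqU f g -> eqU (iter_partial ws f) (iter_partial ws g).
Proof. by elim: ws => //= i ws IH fg; apply: partial_eqU; apply: IH. Qed.

Lemma ip_cat ws1 ws2 f :
  iter_partial (ws1 ++ ws2) f = iter_partial ws1 (iter_partial ws2 f).
Proof. by elim: ws1 => //= i ws IH; rewrite IH. Qed.

Lemma derivable_eqU f g x v : eqU f g -> U x -> derivable f x v -> derivable g x v.
Proof.
move=> fg Ux; apply: near_eq_derivable.
by apply: filterS (nearU Ux); exact: fg.
Qed.

Lemma eqU_sym f g : eqU f g -> eqU g f.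
Proof. by move=> fg x Ux; rewrite fg. Qed.

Lemma smN_eqU N f g : eqU f g -> smN N f -> smN N g.
Proof.
move=> fg sf ws hs x i Ux.
apply: (derivable_eqU (ip_eqU ws fg) Ux); exact: sf.
Qed.

Lemma sm_eqU f g : eqU f g -> sm f -> sm g.
Proof. by move=> fg sf N; apply: smN_eqU fg _. Qed.

Lemma smN_le M N f : (M <= N)%N -> smN N f -> smN M f.
Proof. by move=> MN sf ws hs; apply: sf; apply: leq_trans MN. Qed.

Lemma smN_partial N f i : smN N.+1 f -> smN N (partial i f).
Proof.
move=> sf ws hs x j Ux.
have -> : iter_partial ws (partial i f) = iter_partial (ws ++ [:: i]) f.
  by rewrite ip_cat.
by apply: sf => //; rewrite size_cat addn1.
Qed.

Lemma sm_partial f i : sm f -> sm (partial i f).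
Proof. by move=> sf N; apply: smN_partial. Qed.

Lemma smooth_sm f : smooth_on U f -> sm f.
Proof. by move=> sf N ws _ x i Ux; apply: diff_derivable; apply: sf. Qed.

Lemma ip_cst ws (c : R) : iter_partial ws (fun _ : 'rV[R]_n => c) =
  fun _ => if ws is [::] then c else 0.
Proof.
elim: ws => //= i ws ->; apply/funext => x.
by rewrite /partial; case: ws => [|? ?]; exact: derive_cst.
Qed.

Lemma sm_cst c : sm (fun _ => c).
Proof. by move=> N ws _ x i Ux; rewrite ip_cst; exact: derivable_cst. Qed.

Lemma partialD f g x (i : 'I_n) :
  derivable f x (delta_mx 0 i) -> derivable g x (delta_mx 0 i) ->
  partial i (fun y => f y + g y) x = partial i f x + partial i g x.
Proof. by move=> df dg; rewrite /partial; exact: (deriveD df dg). Qed.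

Lemma derivableD' f g x v :
  derivable f x v -> derivable g x v -> derivable (fun y => f y + g y) x v.
Proof. by move=> df dg; exact: (derivableD df dg). Qed.

Lemma partialM f g x (i : 'I_n) :
  derivable f x (delta_mx 0 i) -> derivable g x (delta_mx 0 i) ->
  partial i (fun y => f y * g y) x = partial i f x * g x + f x * partial i g x.
Proof.
move=> df dg; rewrite /partial.
have := deriveM df dg => /= ->.
by rewrite addrC [g x *: _]mulrC.
Qed.

Lemma derivableM' f g x v :
  derivable f x v -> derivable g x v -> derivable (fun y => f y * g y) x v.
Proof. by move=> df dg; exact: (derivableM df dg). Qed.

Lemma ipD N f g ws : smN N f -> smN N g -> (size ws <= N.+1)%N ->
  eqU (iter_partial ws (fun y => f y + g y))
      (fun y => iter_partial ws f y + iter_partial ws g y).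
Proof.
move=> sf sg; elim: ws => [|i ws IH] //= hs x Ux.
rewrite (partial_eqU i (IH (ltnW hs)) Ux) partialD //; [apply: sf|apply: sg]; done.
Qed.

Lemma smN_add N f g : smN N f -> smN N g -> smN N (fun y => f y + g y).
Proof.
move=> sf sg ws hs x i Ux.
apply: (derivable_eqU (eqU_sym (ipD sf sg (leqW hs))) Ux).
by apply: derivableD'; [apply: sf|apply: sg].
Qed.

Lemma sm_add f g : sm f -> sm g -> sm (fun y => f y + g y).
Proof. by move=> sf sg N; apply: smN_add. Qed.

Lemma smN_mul N f g : smN N f -> smN N g -> smN N (fun y => f y * g y).
Proof.
elim: N f g => [|N IH] f g sf sg ws hs x i Ux.
  case: ws hs => // _; apply: derivableM'; [exact: (sf [::])|exact: (sg [::])].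
have [hN|] := leqP (size ws) N.
  by apply: (IH f g (smN_le (leqnSn N) sf) (smN_le (leqnSn N) sg)).
move=> hN; have eN : size ws = N.+1 by apply/eqP; rewrite eqn_leq hs hN.
case/lastP: ws eN {hs hN} => [//|ws j] eN.
rewrite -cats1 ip_cat /=.
have e : eqU (partial j (fun y => f y * g y))
   (fun y => partial j f y * g y + f y * partial j g y).
  by move=> y Uy; apply: partialM; [exact: (sf [::])|exact: (sg [::])].
have hs : (size ws <= N)%N by rewrite size_rcons in eN; case: eN => ->.
apply: (smN_eqU (eqU_sym e)) hs x i Ux.
apply: smN_add; apply: IH.
- exact: smN_partial.
- exact: smN_le (leqnSn N) sg.
- exact: smN_le (leqnSn N) sf.
- exact: smN_partial.
Qed.

Lemma sm_mul f g : sm f -> sm g -> sm (fun y => f y * g y).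
Proof. by move=> sf sg N; apply: smN_mul. Qed.

Lemma sm_opp f : sm f -> sm (fun y => - f y).
Proof.
move=> sf; apply: (@sm_eqU (fun y => (-1) * f y)); last first. exact (@sm_mul (fun _ => -1) f (@sm_cst (-1)) sf).
by move=> y _; rewrite mulN1r.
Qed.

Lemma sm_sub f g : sm f -> sm g -> sm (fun y => f y - g y).
Proof. by move=> sf sg; apply: sm_add => //; apply: sm_opp. Qed.

Lemma sm_sum (I : Type) (r : seq I) (P : pred I) (F : I -> 'rV[R]_n -> R) :
  (forall i, P i -> sm (F i)) -> sm (fun y => \sum_(i <- r | P i) F i y).
Proof.
move=> sF; elim: r => [|a r IH].
  by apply: (@sm_eqU (fun _ => 0)); [move=> y _; rewrite big_nil|exact: sm_cst].
case Pa: (P a).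
  apply: (@sm_eqU (fun y => F a y + \sum_(i <- r | P i) F i y)).
    by move=> y _; rewrite big_cons Pa.
  by apply: sm_add => //; apply: sF.
by apply: (sm_eqU _ IH) => y _; rewrite big_cons Pa.
Qed.

End Basics.


Section Flat.
Variables (R : realType) (n : nat) (U : set 'rV[R]_n).
Hypothesis oU : open U.
Variable p : 'rV[R]_n.
Hypothesis Up : U p.
Implicit Types (f g : 'rV[R]_n -> R) (ws : seq 'I_n) (x : 'rV[R]_n).

Local Notation sm := (sm U).
Local Notation eqU := (eqU U).

Lemma ipD' f g ws : sm f -> sm g ->
  eqU (iter_partial ws (fun y => f y + g y))
      (fun y => iter_partial ws f y + iter_partial ws g y).
Proof. by move=> sf sg; apply: (ipD oU (sf (size ws)) (sg (size ws))). Qed.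

Lemma ip_sum ws (I : Type) (r : seq I) (P : pred I) (F : I -> 'rV[R]_n -> R) :
  (forall i, P i -> sm (F i)) ->
  eqU (iter_partial ws (fun y => \sum_(i <- r | P i) F i y))
      (fun y => \sum_(i <- r | P i) iter_partial ws (F i) y).
Proof.
move=> sF; elim: r => [|a r IH].
  move=> x Ux; rewrite big_nil.
  have -> : (fun y : 'rV[R]_n => \sum_(i <- [::] | P i) F i y) = fun _ => 0.
    by apply/funext => y; rewrite big_nil.
  by rewrite ip_cst; case: ws.
move=> x Ux; rewrite big_cons; case Pa: (P a).
  have -> : (fun y => \sum_(i <- a :: r | P i) F i y) =
            (fun y => F a y + \sum_(i <- r | P i) F i y).
    by apply/funext => y; rewrite big_cons Pa.
  rewrite (ipD' _ (sF a Pa) (@sm_sum _ _ _ oU _ r P F sF)) // IH //.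
have -> : (fun y => \sum_(i <- a :: r | P i) F i y) =
          (fun y => \sum_(i <- r | P i) F i y).
  by apply/funext => y; rewrite big_cons Pa.
exact: IH.
Qed.

Definition vanN N f := forall ws, (size ws <= N)%N -> iter_partial ws f p = 0.

Lemma van_mul N f g : sm f -> sm g -> vanN N f -> vanN N (fun y => f y * g y).
Proof.
elim: N f g => [|N IH] f g sf sg vf ws hs.
  by case: ws hs => // _ /=; have := vf [::] isT => /= ->; rewrite mul0r.
have [hN|] := leqP (size ws) N.
  by apply: IH => // ws' h'; apply: vf; apply: leq_trans h' (leqnSn N).
move=> hN; have eN : size ws = N.+1 by apply/eqP; rewrite eqn_leq hs hN.
case/lastP: ws eN {hs hN} => [//|ws j] eN.
have hs : (size ws <= N)%N by rewrite size_rcons in eN; case: eN => ->.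
rewrite -cats1 ip_cat /=.
have e : eqU (partial j (fun y => f y * g y))
   (fun y => partial j f y * g y + f y * partial j g y).
  by move=> y Uy; apply: partialM; [exact: (sf 0%N [::])|exact: (sg 0%N [::])].
rewrite (ip_eqU oU ws e Up) (ipD' _ (sm_mul oU (@sm_partial _ _ _ f j sf) sg)
   (sm_mul oU sf (@sm_partial _ _ _ g j sg))) //.
rewrite (IH (partial j f) g) ?(IH f (partial j g)) ?addr0 //.
- exact: sm_partial.
- by move=> ws' h'; apply: vf; apply: leq_trans h' (leqnSn N).
- exact: sm_partial.
- move=> ws' h'; rewrite -[partial j f]/(iter_partial [:: j] f) -ip_cat.
  by apply: vf; rewrite size_cat addn1.
Qed.

Definition flat f := sm f /\ forall ws, iter_partial ws f p = 0.

Lemma flat_at f : flat f -> f p = 0.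
Proof. by case=> _ h; apply: (h [::]). Qed.

Lemma flat_van f : flat f -> forall N, vanN N f.
Proof. by case=> _ h N ws _; apply: h. Qed.

Lemma van_flat f : sm f -> (forall N, vanN N f) -> flat f.
Proof. by move=> sf h; split=> // ws; apply: (h (size ws)). Qed.

Lemma flat_mull f g : flat f -> sm g -> flat (fun y => f y * g y).
Proof.
move=> ff sg; apply: van_flat; first by case: ff => sf _; exact: (@sm_mul _ _ _ oU f g sf sg).
by move=> N; apply: van_mul => //; [by case: ff|exact: flat_van].
Qed.

Lemma flat_mulr f g : sm g -> flat f -> flat (fun y => g y * f y).
Proof.
move=> sg ff; have -> : (fun y => g y * f y) = (fun y => f y * g y).
  by apply/funext => y; rewrite mulrC.
exact: flat_mull.
Qed.

Lemma flat_eqU f g : eqU f g -> flat f -> flat g.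
Proof.
move=> fg [sf hf]; split; first exact (sm_eqU oU fg sf).
by move=> ws; rewrite -(ip_eqU oU ws fg Up).
Qed.

Lemma flat_add f g : flat f -> flat g -> flat (fun y => f y + g y).
Proof.
move=> [sf hf] [sg hg]; split; first exact (sm_add oU sf sg).
by move=> ws; rewrite (ipD' _ sf sg) // hf hg addr0.
Qed.

Lemma flat0 : flat (fun _ => 0).
Proof. by split; [exact: sm_cst|move=> ws; rewrite ip_cst; case: ws]. Qed.

Lemma flat_opp f : flat f -> flat (fun y => - f y).
Proof.
move=> ff; apply: (@flat_eqU (fun y => (-1) * f y)).
  by move=> y _; rewrite mulN1r.
exact: (@flat_mulr f (fun _ => -1) (@sm_cst _ _ _ (-1)) ff).
Qed.

Lemma flat_sub f g : flat f -> flat g -> flat (fun y => f y - g y).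
Proof. by move=> ff fg; apply: flat_add => //; apply: flat_opp. Qed.

Lemma flat_sum (I : Type) (r : seq I) (P : pred I) (F : I -> 'rV[R]_n -> R) :
  (forall i, P i -> flat (F i)) -> flat (fun y => \sum_(i <- r | P i) F i y).
Proof.
move=> fF; split; first by apply: (sm_sum oU) => i Pi; case: (fF i Pi).
move=> ws; rewrite (ip_sum _ _ _ Up); last by move=> i Pi; case: (fF i Pi).
by rewrite big1 // => i Pi; case: (fF i Pi) => _ ->.
Qed.

Lemma flat_partial f i : flat f -> flat (partial i f).
Proof.
move=> [sf hf]; split; first exact: sm_partial.
by move=> ws; rewrite -[partial i f]/(iter_partial [:: i] f) -ip_cat.
Qed.

Definition eqv f g := flat (fun y => f y - g y).

Lemma eqv_at f g : eqv f g -> f p = g p.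
Proof. by move/flat_at/eqP; rewrite subr_eq0 => /eqP. Qed.

Lemma partialB f g x i : derivable f x (delta_mx 0 i) -> derivable g x (delta_mx 0 i) ->
  partial i (fun y => f y - g y) x = partial i f x - partial i g x.
Proof. by move=> df dg; rewrite /partial; exact: (deriveB df dg). Qed.

Lemma eqv_partial f g i : sm f -> sm g -> eqv f g -> eqv (partial i f) (partial i g).
Proof.
move=> sf sg e; apply: (flat_eqU _ (flat_partial i e)) => x Ux.
by rewrite partialB //; [exact: (sf 0%N [::])|exact: (sg 0%N [::])].
Qed.

End Flat.


Section HC.
Variables (R : realType) (n : nat) (U : set 'rV[R]_n).
Hypothesis oU : open U.
Variable p : 'rV[R]_n.
Hypothesis Hp : U p.
Variables (B : finType) (G : 'I_n -> 'I_n -> 'I_n -> 'rV[R]_n -> R)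
  (A : 'I_n -> B -> B -> 'rV[R]_n -> R).
Hypothesis sG : forall i j k, sm U (G i j k).
Hypothesis sA : forall i b b', sm U (A i b b').

Local Notation sm := (sm U).
Local Notation flat := (flat U p).
Local Notation eqv := (eqv U p).

Lemma sm_hc (F : cfield R n B) : (forall L Up b, sm (F L Up b)) ->
  forall d S L Up b, sm (fun y => hc G A F d S L Up b y).
Proof.
move=> sF; elim=> [|d IH] [|i0 W] L Up b //=.
refine (sm_sub oU (sm_add oU (sm_sub oU (sm_add oU _ _) _) _) _).
- exact (sm_partial (i:=i0) (IH W L Up b)).
- exact (sm_sum oU (fun (b' : B) _ => sm_mul oU (@sA i0 b' b) (IH W L Up b'))).
- exact (sm_sum oU (fun (k : 'I_(size L)) _ => sm_sum oU (fun (m : 'I_n) _ =>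
    sm_mul oU (@sG i0 (nth i0 L k) m) (IH W (set_nth m L k m) Up b)))).
- exact (sm_sum oU (fun (k : 'I_(size Up)) _ => sm_sum oU (fun (m : 'I_n) _ =>
    sm_mul oU (@sG i0 m (nth i0 Up k)) (IH W L (set_nth m Up k m) b)))).
- exact (sm_sum oU (fun (k : 'I_(size W)) _ => sm_sum oU (fun (m : 'I_n) _ =>
    sm_mul oU (@sG i0 (nth i0 W k) m) (IH (set_nth m W k m) L Up b)))).
Qed.

Definition iterA (F0 : B -> 'rV[R]_n -> R) (S : seq 'I_n) : B -> 'rV[R]_n -> R :=
  foldr (fun i D b x => partial i (D b) x + \sum_(b' : B) A i b' b x * D b' x) F0 S.

Lemma sm_iterA F0 : (forall b, sm (F0 b)) -> forall S b, sm (iterA F0 S b).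
Proof.
move=> sF; elim=> [|i S IH] b //=.
refine (sm_add oU _ _).
- exact (sm_partial (i:=i) (IH b)).
- exact (sm_sum oU (fun (b' : B) _ => sm_mul oU (@sA i b' b) (IH b'))).
Qed.

Hypothesis flG : forall i j k, flat (G i j k).

Lemma hc_main (F : cfield R n B) : (forall L Up b, sm (F L Up b)) ->
  forall d S, size S = d -> forall L Up b,
  eqv (fun y => hc G A F d S L Up b y) (iterA (F L Up) S b).
Proof.
move=> sF; elim=> [|d IH] [|i0 W] //= hS L Up b.
  by apply: (flat_eqU oU Hp _ (flat0 U p)) => y _; rewrite subrr.
case: hS => hS.
set X1 := fun y => \sum_(k < size L) \sum_(m < n)
          G i0 (nth i0 L k) m y * hc G A F d W (set_nth m L k m) Up b y.
set X2 := fun y => \sum_(k < size Up) \sum_(m < n)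
          G i0 m (nth i0 Up k) y * hc G A F d W L (set_nth m Up k m) b y.
set X3 := fun y => \sum_(k < size W) \sum_(m < n)
          G i0 (nth i0 W k) m y * hc G A F d (set_nth m W k m) L Up b y.
have f1 : flat X1.
  apply: (flat_sum oU Hp) => k _; apply: (flat_sum oU Hp) => m _.
  by apply: (flat_mull oU Hp); [exact: flG|exact: (sm_hc sF)].
have f2 : flat X2.
  apply: (flat_sum oU Hp) => k _; apply: (flat_sum oU Hp) => m _.
  by apply: (flat_mull oU Hp); [exact: flG|exact: (sm_hc sF)].
have f3 : flat X3.
  apply: (flat_sum oU Hp) => k _; apply: (flat_sum oU Hp) => m _.
  by apply: (flat_mull oU Hp); [exact: flG|exact: (sm_hc sF)].
have f0 : eqv (partial i0 (fun y => hc G A F d W L Up b y)) (partial i0 (iterA (F L Up) W b)).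
  apply: eqv_partial => //; first exact: (sm_hc sF).
  - by apply: sm_iterA.
  - exact: IH.
have fA : flat (fun y => \sum_(b' : B) A i0 b' b y *
          (hc G A F d W L Up b' y - iterA (F L Up) W b' y)).
  apply: (flat_sum oU Hp) => b' _; apply: flat_mulr => //; exact: IH.
have := flat_sub oU Hp (flat_add oU Hp (flat_sub oU Hp (flat_add oU Hp f0 fA) f1) f2) f3.
apply: (flat_eqU oU Hp) => y _; rewrite /X1 /X2 /X3 /=.
set s1 := \sum_(k < size L) _; set s2 := \sum_(k < size Up) _;
set s3 := \sum_(k < size W) _.
have -> : \sum_(b' : B) A i0 b' b y * (hc G A F d W L Up b' y - iterA (F L Up) W b' y)
  = \sum_(b' : B) A i0 b' b y * hc G A F d W L Up b' y -
    \sum_(b' : B) A i0 b' b y * iterA (F L Up) W b' y.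
  by rewrite -sumrB; apply: eq_bigr => b' _; rewrite mulrBr.
ring.
Qed.

End HC.

Lemma iterA0 (R : realType) (n : nat) (B : finType) (F0 : B -> 'rV[R]_n -> R) S b :
  iterA (fun _ _ _ _ => 0) F0 S b = iter_partial S (F0 b).
Proof.
elim: S b => [|i S IH] b //=; apply/funext => x.
rewrite big1 ?addr0; first by rewrite IH.
by move=> b' _; rewrite mul0r.
Qed.


Section Chr.
Variables (R : realType) (n : nat) (U : set 'rV[R]_n).
Hypothesis oU : open U.
Variable p : 'rV[R]_n.
Hypothesis Hp : U p.
Variables (G : 'I_n -> 'I_n -> 'I_n -> 'rV[R]_n -> R).
Hypothesis sG : forall i j k, sm U (G i j k).
Implicit Types (f g : 'rV[R]_n -> R) (ws : seq 'I_n).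

Local Notation sm := (sm U).
Local Notation vanN := (vanN p).

Lemma van_add N f g : sm f -> sm g -> vanN N f -> vanN N g -> vanN N (fun y => f y + g y).
Proof. by move=> sf sg vf vg ws hs; rewrite (ipD' oU _ sf sg Hp) vf // vg // addr0. Qed.

Lemma van_opp N f : sm f -> vanN N f -> vanN N (fun y => - f y).
Proof.
move=> sf vf; have -> : (fun y => - f y) = (fun y => f y * (-1)).
  by apply/funext => y; rewrite mulrN1.
exact: (van_mul oU Hp sf (@sm_cst _ _ U (-1)) vf).
Qed.

Lemma van_sub N f g : sm f -> sm g -> vanN N f -> vanN N g -> vanN N (fun y => f y - g y).
Proof.
by move=> sf sg vf vg; apply: van_add => //; [exact (sm_opp oU sg)|exact: van_opp].
Qed.

Lemma van_sum N (I : Type) (r : seq I) (P : pred I) (F : I -> 'rV[R]_n -> R) :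
  (forall i, P i -> sm (F i)) -> (forall i, P i -> vanN N (F i)) ->
  vanN N (fun y => \sum_(i <- r | P i) F i y).
Proof.
move=> sF vF ws hs; rewrite (ip_sum oU ws r sF Hp).
by rewrite big1 // => i Pi; apply: vF.
Qed.

Lemma van_mulr N f g : sm f -> sm g -> vanN N f -> vanN N (fun y => g y * f y).
Proof.
move=> sf sg vf; have -> : (fun y => g y * f y) = (fun y => f y * g y).
  by apply/funext => y; rewrite mulrC.
exact (van_mul oU Hp sf sg vf).
Qed.

Definition A0 : 'I_n -> unit -> unit -> 'rV[R]_n -> R := fun _ _ _ _ => 0.

Lemma sm_A0 i b b' : sm (A0 i b b').
Proof. exact: sm_cst. Qed.

Lemma sm_vecfield j L Up b : sm (@vecfield R n j L Up b).
Proof. by rewrite /vecfield; case: Up => [|k [|? ?]]; exact: sm_cst. Qed.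

Lemma sm_chr k W j : sm (chr G k W j).
Proof. exact (@sm_hc _ _ _ oU _ G A0 sG sm_A0 _ (@sm_vecfield j) (size W) W [::] [:: k] tt). Qed.

Lemma chr_rec i W j k x : chr G k (i :: W) j x =
  partial i (chr G k W j) x + \sum_(m < n) G i m k x * chr G m W j x
  - \sum_(k' < size W) \sum_(m < n) G i (nth i W k') m x * chr G k (set_nth m W k' m) j x.
Proof.
rewrite /chr /hcovT /hcov /=.
rewrite big_ord0 big_ord1 big1 ?mul0r ?addr0 ?subr0 //.
congr (_ - _); apply: eq_bigr => k' _; apply: eq_bigr => m _.
  by rewrite size_set_nth; move: (ltn_ord k') => /maxn_idPr ->.
by move=> *; rewrite mul0r.
Qed.

Lemma G_chr i j k x : G i j k x = chr G k [:: i] j x.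
Proof.
rewrite chr_rec /= big_ord0 subr0.
have -> : partial i (chr G k [::] j) x = 0.
  by rewrite /partial /chr /hcovT /hcov /=; exact: derive_cst.
rewrite add0r (bigD1 j) //= /chr /hcovT /hcov /vecfield /= eqxx mulr1 big1 ?addr0 //.
by move=> m /negbTE ->; rewrite mulr0.
Qed.

Hypothesis hchr : forall W j k, W != [::] -> chr G k W j p = 0.

Lemma chr_van N : forall W j k, W != [::] -> vanN N (chr G k W j).
Proof.
elim: N => [|N IH] W j k W0 ws hs.
  by case: ws hs => // _; exact: hchr.
have [hN|] := leqP (size ws) N; first exact: IH.
move=> hN; have eN : size ws = N.+1 by apply/eqP; rewrite eqn_leq hs hN.
case/lastP: ws eN {hs hN} => [//|ws i] eN.
have hs : (size ws <= N)%N by rewrite size_rcons in eN; case: eN => ->.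
rewrite -cats1 ip_cat /=.
have -> : partial i (chr G k W j) = fun x => chr G k (i :: W) j x
   - \sum_(m < n) G i m k x * chr G m W j x
   + \sum_(k' < size W) \sum_(m < n) G i (nth i W k') m x * chr G k (set_nth m W k' m) j x.
  by apply/funext => x; rewrite chr_rec; ring.
have s1 : sm (fun x => \sum_(m < n) G i m k x * chr G m W j x).
  exact (sm_sum oU (fun (m : 'I_n) _ => sm_mul oU (@sG i m k) (@sm_chr m W j))).
have s2 : sm (fun x => \sum_(k' < size W) \sum_(m < n)
    G i (nth i W k') m x * chr G k (set_nth m W k' m) j x).
  exact (sm_sum oU (fun (k' : 'I_(size W)) _ => sm_sum oU (fun (m : 'I_n) _ =>
    sm_mul oU (@sG i (nth i W k') m) (@sm_chr k (set_nth m W k' m) j)))).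
clear eN; move: ws hs; apply: (@van_add N) => //.
- exact (sm_sub oU (@sm_chr k (i :: W) j) s1).
- apply: van_sub => //; first exact: sm_chr.
  + exact: IH.
  + apply: van_sum => m _; first exact (sm_mul oU (@sG i m k) (@sm_chr m W j)).
    by apply: van_mulr => //; [exact: sm_chr|exact: IH].
- apply: van_sum => k' _.
    exact (sm_sum oU (fun (m : 'I_n) _ =>
      sm_mul oU (@sG i (nth i W k') m) (@sm_chr k (set_nth m W k' m) j))).
  apply: van_sum => m _.
    exact (sm_mul oU (@sG i (nth i W k') m) (@sm_chr k (set_nth m W k' m) j)).
  apply: van_mulr => //; first exact: sm_chr.
  by apply: IH; rewrite -size_eq0 size_set_nth -lt0n leq_max.
Qed.

Lemma chr_flat W j k : W != [::] -> flat U p (chr G k W j).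
Proof. by move=> W0; apply: van_flat; [exact: sm_chr|move=> N; exact: chr_van]. Qed.

Lemma G_flat i j k : flat U p (G i j k).
Proof.
apply: (flat_eqU oU Hp (f := chr G k [:: i] j)); first by move=> x _; rewrite G_chr.
exact: chr_flat.
Qed.

End Chr.


Section Mono.
Variables (R : realType) (n : nat).

Lemma line_derive (g : 'rV[R]_n -> R) x v (c : R) :
  (forall h : R, g (h *: v + x) = g x + h * c) -> derivable g x v /\ derive g x v = c.
Proof.
move=> H.
have E : (fun h : R => h^-1 *: ((g \o shift x) (h *: v) - g x)) = (fun h => h^-1 * h * c).
  by apply/funext => h /=; rewrite H addrC addKr -mulrA.
have C : (fun h : R => h^-1 * h * c) @ 0^' --> c.
  apply: cvg_trans _ (@cvg_cst _ c R 0^' _).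
  apply: near_eq_cvg; near=> h; rewrite mulVf ?mul1r //.
  near: h; exact: nbhs_dnbhs_neq.
have C' : (fun h : R => h^-1 *: ((g \o shift x) (h *: v) - g x)) @ 0^' --> c.
  by rewrite E.
split; first by apply/cvg_ex; exists c; exact: C'.
exact: (cvg_lim _ C').
Unshelve. all: by end_near.
Qed.

Variable p : 'rV[R]_n.

Definition decr (j : 'I_n) (T : 'I_n -> nat) : 'I_n -> nat :=
  fun i => if i == j then (T i).-1 else T i.

Lemma q_line (j i : 'I_n) (x : 'rV[R]_n) (h : R) :
  (h *: delta_mx 0 j + x) ord0 i - p ord0 i = (x ord0 i - p ord0 i) + h * (i == j)%:R.
Proof. by rewrite !mxE eqxx /=; ring. Qed.

Lemma mono_derive (T : 'I_n -> nat) (j : 'I_n) (x : 'rV[R]_n) :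
  derivable (monomial p T) x (delta_mx 0 j) /\
  partial j (monomial p T) x = (if T j is t.+1 then monomial p (decr j T) x else 0).
Proof.
pose Q := fun y : 'rV[R]_n => \prod_(i < n | i != j) (y ord0 i - p ord0 i) ^+ T i.
pose q := fun y : 'rV[R]_n => y ord0 j - p ord0 j.
pose c := ((\prod_(i < n) (T i)`!)%:R : R).
have eM : monomial p T = fun y => (q y ^+ T j * Q y) * c^-1.
  by apply/funext => y; rewrite /monomial (bigD1 j).
have [dQ DQ] : derivable Q x (delta_mx 0 j) /\ derive Q x (delta_mx 0 j) = 0.
  apply: line_derive => h; rewrite mulr0 addr0; apply: eq_bigr => i ij.
  by rewrite q_line (negbTE ij) mulr0 addr0.
have [dq Dq] : derivable q x (delta_mx 0 j) /\ derive q x (delta_mx 0 j) = 1.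
  by apply: line_derive => h; rewrite /q q_line eqxx mulr1.
have eX : (fun y => q y ^+ T j) = q ^+ T j by rewrite exprfctE.
have dqX : derivable (fun y => q y ^+ T j) x (delta_mx 0 j).
  by rewrite eX; apply: derivableX.
have DqX : derivable (fun y => q y ^+ T j) x (delta_mx 0 j) /\ partial j (fun y => q y ^+ T j) x = (T j)%:R * q x ^+ (T j).-1.
  split => //; rewrite /partial eX deriveX // Dq.
  by rewrite /GRing.scale /= mulr1.
have dP : derivable (fun y => q y ^+ T j * Q y) x (delta_mx 0 j).
  exact: derivableM'.
have dc : derivable (fun _ : 'rV[R]_n => c^-1) x (delta_mx 0 j) by exact: derivable_cst.
rewrite eM; split; first exact: derivableM'.
rewrite (partialM dP dc) (partialM dqX dQ) DqX.2.
have -> : partial j (fun _ : 'rV[R]_n => c^-1) x = 0 by exact: derive_cst.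
rewrite /partial DQ mulr0 addr0 mulr0 addr0.
case E: (T j) => [|t]; first by rewrite /= !mul0r.
rewrite /=.
rewrite /monomial (bigD1 j) //= /decr eqxx E /=.
have -> : \prod_(i < n | i != j) (x ord0 i - p ord0 i) ^+ (if i == j then (T i).-1 else T i)
   = Q x by apply: eq_bigr => i /negbTE ->.
rewrite (bigD1 j (P := predT)) //= /c (bigD1 j (P := predT)) //= eqxx E.
have -> : \prod_(i < n | i != j) (if i == j then (T i).-1 else T i)`! =
   \prod_(i < n | i != j) (T i)`! by apply: eq_bigr => i /negbTE ->.
rewrite factS !natrM /=.
have h1 : (t`!%:R : R) != 0 by rewrite pnatr_eq0 -lt0n fact_gt0.
have h2 : ((\prod_(i < n | i != j) (T i)`!)%:R : R) != 0.
  by rewrite pnatr_eq0 -lt0n prodn_gt0 // => i; rewrite fact_gt0.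
have h3 : ((t.+1)%:R : R) != 0 by rewrite pnatr_eq0.
have eP : (((\prod_(i < n | i != j) (T i)`!)%R)%:R : R) =
  ((\prod_(i < n | i != j) (T i)`!)%N)%:R by [].
rewrite eP /q.
by field; rewrite h1 h2 [1 + _]addrC natr1 h3.
Qed.

Definition msub (T : 'I_n -> nat) (S : seq 'I_n) : 'I_n -> nat :=
  fun k => (T k - letters S k)%N.

Lemma lettersS (i : 'I_n) S k : letters (i :: S) k = (letters S k + (i == k))%N.
Proof. by rewrite /letters /= addnC. Qed.

Lemma ip_mono S T : iter_partial S (monomial p T) =
  fun x => if [forall k, (letters S k <= T k)%N] then monomial p (msub T S) x else 0.
Proof.
elim: S => [|i S IH] /=.
  apply/funext => x; rewrite ifT; last by apply/forallP => k.
  by congr monomial; apply/funext => k; rewrite /msub subn0.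
rewrite IH; apply/funext => x.
case C: [forall k, (letters S k <= T k)%N]; last first.
  rewrite ifF; first exact: derive_cst.
  apply/negbTE/negP => /forallP H; move/negbT: C => /negP; apply; apply/forallP => k.
  by move: (H k) => /=; apply: leq_trans; exact: leq_addl.
have [_ ->] := mono_derive (msub T S) i x.
rewrite {1}/msub; case E: (T i - letters S i)%N => [|t].
  rewrite ifF //; apply/negbTE/negP => /forallP/(_ i) /=; rewrite eqxx add1n.
  by move/eqP: E; rewrite subn_eq0 => E1 E2; have := leq_trans E2 E1; rewrite ltnn.
rewrite ifT.
  congr monomial; apply/funext => k; rewrite /decr /msub /= -/(letters S k).
  case: eqP => [->|/eqP ik]; first by rewrite eqxx add1n subnS.
  by rewrite eq_sym (negbTE ik) add0n.
apply/forallP => k /=; case: eqP => [<-|_].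
  by rewrite add1n -subn_gt0 E.
by rewrite add0n; exact: (forallP C k).
Qed.

Lemma mono_at T : monomial p T p = if [forall k, T k == 0%N] then 1 else 0.
Proof.
rewrite /monomial; case: ifP => [/forallP H|/negbT].
  rewrite big1 => [|k _]; last by rewrite (eqP (H k)) expr0.
  rewrite big1 => [|k _]; last by rewrite (eqP (H k)).
  by rewrite mul1r invr1.
rewrite negb_forall => /existsP [k Tk].
by rewrite (bigD1 k) //= subrr expr0n (negbTE Tk) !mul0r.
Qed.

Lemma ip_mono_p S T : iter_partial S (monomial p T) p = kdelta (letters S) T.
Proof.
rewrite ip_mono /kdelta mono_at.
case: ifP => [/forallP C|/negbT C].
  apply/esym; case: ifP => [/forallP H|/negbT].
    rewrite ifT //; apply/forallP => k; by rewrite /msub (eqP (H k)) subnn.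
  rewrite negb_forall => /existsP [k /eqP Hk].
  rewrite ifF //; apply/negbTE; rewrite negb_forall; apply/existsP; exists k.
  rewrite /msub subn_eq0; apply/negP => H; apply: Hk; apply/eqP.
  by rewrite eqn_leq H (C k).
rewrite ifF //; apply/negbTE/negP => /forallP H; move: C => /negP; apply.
by apply/forallP => k; rewrite (eqP (H k)).
Qed.

Lemma sm_mono (U : set 'rV[R]_n) T : sm U (monomial p T).
Proof.
move=> N ws _ x i _; rewrite ip_mono.
case: [forall k, (letters ws k <= T k)%N]; last exact: derivable_cst.
exact: (mono_derive _ i x).1.
Qed.

End Mono.


Lemma unshuffle_nil (R : realType) (n : nat) (F : seq 'I_n * seq 'I_n -> R) :
  \sum_(P <- unshuffle [::]) F P = F ([::], [::]).
Proof.
rewrite /unshuffle big_map big_enum /= (big_pred1 [tuple]) => [|t].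
  by [].
by rewrite inE; apply/esym/eqP; exact: tuple0.
Qed.

Lemma unshuffle_cons (R : realType) (n : nat) (i : 'I_n) W (F : seq 'I_n * seq 'I_n -> R) :
  \sum_(P <- unshuffle (i :: W)) F P =
  \sum_(P <- unshuffle W) (F (i :: P.1, P.2) + F (P.1, i :: P.2)).
Proof.
have E : forall T : finType, Finite.enum T = index_enum T.
  by move=> T; rewrite [index_enum _]unlock.
rewrite /unshuffle !big_map !E.
pose h := fun q : bool * (size W).-tuple bool => [tuple of q.1 :: q.2].
have hb : bijective h.
  exists (fun t : (size W).+1.-tuple bool => (thead t, [tuple of behead t])).
    by case=> b t; congr pair; apply: val_inj.
  by move=> t; case/tupleP: t => b t; apply: val_inj.
rewrite (reindex h) /=; last by apply: onW_bij.
rewrite -(pair_bigA _ (fun b t => F (mask (h (b, t)) (i :: W),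
   mask (map negb (h (b, t))) (i :: W)))) /= big_bool /= big_split /=.
by rewrite addrC.
Qed.


Section Leib.
Variables (R : realType) (n : nat) (U : set 'rV[R]_n).
Hypothesis oU : open U.
Variable p : 'rV[R]_n.
Variables (r : nat) (A : 'I_n -> 'I_r -> 'I_r -> 'rV[R]_n -> R).
Hypothesis sA : forall i b b', sm U (A i b b').
Variable (T : 'I_n -> nat) (al : 'I_r -> 'rV[R]_n -> R).
Hypothesis sal : forall b, sm U (al b).

Lemma sm_ip ws f : sm U f -> sm U (iter_partial ws f).
Proof. by elim: ws => //= i ws IH sf; apply: sm_partial; apply: IH. Qed.

Lemma sm_ic S b : sm U (iter_cov A S al b).
Proof. exact (@sm_iterA _ _ _ oU _ A sA al sal S b). Qed.

Lemma leibniz S b : eqU U (iter_cov A S (fun b x => monomial p T x * al b x) b)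
  (fun x => \sum_(P <- unshuffle S)
      iter_partial P.1 (monomial p T) x * iter_cov A P.2 al b x).
Proof.
elim: S b => [|i W IH] b x Ux.
  by rewrite unshuffle_nil.
rewrite unshuffle_cons /=.
rewrite /cov1 (partial_eqU oU i (IH b) Ux).
have -> : \sum_(b' < r) A i b' b x * iter_cov A W (fun b0 x0 => monomial p T x0 * al b0 x0) b' x
  = \sum_(b' < r) A i b' b x * \sum_(P <- unshuffle W)
      iter_partial P.1 (monomial p T) x * iter_cov A P.2 al b' x.
  by apply: eq_bigr => b' _; rewrite IH.
have smP : forall P : seq 'I_n * seq 'I_n, true -> sm U
   (fun y => iter_partial P.1 (monomial p T) y * iter_cov A P.2 al b y).
  by move=> P _; apply: sm_mul => //; [apply: sm_ip; exact: sm_mono|exact: sm_ic].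
have := @ip_sum _ _ _ oU [:: i] _ (unshuffle W) xpredT _ smP x Ux.
rewrite /= => ->.
under [X in _ + X]eq_bigr => b' _ do rewrite big_distrr.
rewrite /= exchange_big /= -big_split /=; apply: eq_bigr => P _.
rewrite partialM; last 2 first.
- have h1 : sm U (iter_partial P.1 (monomial p T)) by apply: sm_ip; exact: sm_mono.
  exact: (h1 0%N [::] isT x i Ux).
- have h2 : sm U (iter_cov A P.2 al b) by exact: sm_ic.
  exact: (h2 0%N [::] isT x i Ux).
rewrite /cov1 mulrDr big_distrr /=.
have -> : \sum_(j < r) A i j b x * (iter_partial P.1 (monomial p T) x * iter_cov A P.2 al j x)
  = \sum_(j < r) iter_partial P.1 (monomial p T) x * (A i j b x * iter_cov A P.2 al j x).
  by apply: eq_bigr => j _; rewrite mulrCA.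
ring.
Qed.

End Leib.


Lemma hc_at (R : realType) (n : nat) (U : set 'rV[R]_n) (p : 'rV[R]_n)
  (oU : open U) (Hp : U p) (B : finType) (G : 'I_n -> 'I_n -> 'I_n -> 'rV[R]_n -> R)
  (A : 'I_n -> B -> B -> 'rV[R]_n -> R)
  (sG : forall i j k, sm U (G i j k)) (sA : forall i b b', sm U (A i b b'))
  (flG : forall i j k, flat U p (G i j k)) (F : cfield R n B)
  (sF : forall L Up b, sm U (F L Up b)) S L Up b :
  hc G A F (size S) S L Up b p = iterA A (F L Up) S b p.
Proof. exact: (eqv_at (hc_main oU Hp sG sA flG sF (S:=S) erefl L Up b)). Qed.

Lemma hcT_at (R : realType) (n : nat) (U : set 'rV[R]_n) (p : 'rV[R]_n)
  (oU : open U) (Hp : U p) (G : 'I_n -> 'I_n -> 'I_n -> 'rV[R]_n -> R)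
  (sG : forall i j k, sm U (G i j k))
  (flG : forall i j k, flat U p (G i j k)) (F : cfield R n unit)
  (sF : forall L Up b, sm U (F L Up b)) S L Up :
  hcovT G F S L Up tt p = iter_partial S (F L Up tt) p.
Proof.
have := @hc_at R n U p oU Hp unit G (@A0 R n) sG (@sm_A0 R n U) flG F sF S L Up tt.
by rewrite /hcovT /hcov => ->; rewrite /A0 iterA0.
Qed.

Unset Implicit Arguments.
Theorem lemma2p14 (R : realType) (n : nat) (U : set 'rV[R]_n) (p : 'rV[R]_n)
  (G : 'I_n -> 'I_n -> 'I_n -> 'rV[R]_n -> R)
  (r : nat) (A : 'I_n -> 'I_r -> 'I_r -> 'rV[R]_n -> R) :
  open U -> U p ->
  (forall i j k, smooth_on U (G i j k)) ->
  (forall i j k x, U x -> G i j k x = G j i k x) ->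
  (forall i b b', smooth_on U (A i b b')) ->
  (forall (W : seq 'I_n) (j k : 'I_n), W != [::] -> chr G k W j p = 0) ->
  (forall (S W : seq 'I_n) (j k : 'I_n), W != [::] ->
      hcovT G (scalarfield (chr G k W j)) S [::] [::] tt p = 0)
  /\ (forall (S : seq 'I_n) (a b c d : 'I_n),
      hcovT G (Rcomp G) S [:: a; b; c] [:: d] tt p = 0)
  /\ (forall (S : seq 'I_n) (al : 'I_r -> 'rV[R]_n -> R),
      (forall b, smooth_on U (al b)) ->
      forall b, hcov G A (sectionf al) S [::] [::] b p = iter_cov A S al b p)
  /\ (forall (S : seq 'I_n) (T : 'I_n -> nat),
      hcovT G (scalarfield (monomial p T)) S [::] [::] tt p
      = kdelta (letters S) T)
  /\ (forall (S : seq 'I_n) (T : 'I_n -> nat) (al : 'I_r -> 'rV[R]_n -> R),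
      (forall b, smooth_on U (al b)) ->
      forall b,
      hcov G A (sectionf (fun b x => monomial p T x * al b x)) S [::] [::] b p
      = \sum_(P <- unshuffle S)
          kdelta (letters P.1) T * hcov G A (sectionf al) P.2 [::] [::] b p).
Proof.
move=> oU Hp sG0 _ sA0 hchr.
have sG : forall i j k, sm U (G i j k) by move=> i j k; apply: smooth_sm.
have sA : forall i b b', sm U (A i b b') by move=> i b b'; apply: smooth_sm.
have flG := G_flat oU Hp sG hchr.
have hsec : forall al : 'I_r -> 'rV[R]_n -> R, (forall b, sm U (al b)) ->
    forall S b, hcov G A (sectionf al) S [::] [::] b p = iter_cov A S al b p.
  move=> al sal S b; rewrite /hcov.
  by rewrite (@hc_at R n U p oU Hp _ G A sG sA flG (sectionf al)).
split.
  move=> S W j k W0.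
  rewrite (hcT_at oU Hp sG flG) /=; last by move=> *; exact: sm_chr.
  by case: (chr_flat oU Hp sG hchr j k W0) => _ ->.
split.
  move=> S a b c d.
  have Rf : forall L Up, flat U p (Rcomp G L Up tt).
    move=> L Up; rewrite /Rcomp.
    case: L => [|a' [|b' [|c' [|? ?]]]]; try exact: flat0;
    case: Up => [|d' [|? ?]]; try exact: flat0.
    by apply: flat_sub => //; apply: chr_flat.
  rewrite (hcT_at oU Hp sG flG); last by move=> L Up []; case: (Rf L Up).
  by case: (Rf [:: a; b; c] [:: d]) => _ ->.
split.
  by move=> S al sal b; apply: hsec => b'; apply: smooth_sm.
split.
  move=> S T; rewrite (hcT_at oU Hp sG flG); last by move=> *; exact: sm_mono.
  exact: ip_mono_p.
move=> S T al sal0 b.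
have sal : forall b, sm U (al b) by move=> b'; apply: smooth_sm.
rewrite hsec; last by move=> b'; apply: sm_mul => //; exact: sm_mono.
rewrite (leibniz oU p sA T sal S b Hp); apply: eq_bigr => P _.
by rewrite ip_mono_p hsec.
Qed.
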